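(* (AdS shift.) Consider the single-fluid shifted system with $\sigma<0$, and let $t_{\mathrm b},\xi_{\mathrm b},\xi_0,t_0$ be as in the time-interval setup and $b:=\max_{t\in[t_{\mathrm b},t_0]}\sqrt2\,|y_{\mathrm i}(t)|h(t)/l>0$. Then $$\Delta t_{\mathrm b0}\ \ge\ \frac{1}{2\sqrt{2\xi_0}}\,\frac{1}{b\,c\,l}\,\frac{\xi_0-\xi_{\mathrm b}}{\sqrt{1+|\sigma|/h(t_0)^2}}.$$
   Context: Shifted single-fluid system. Fix real constants $c>0$, $l>0$, $w\in[-1,1]$ and $\sigma\in\mathbb{R}$. Let $I\subseteq\mathbb R$ be an interval and $x,y_{\mathrm r},y_{\mathrm i},z,h$ real $C^1$ functions on $I$ with $h>0$, $z\ge0$. Define $\xi=x^2+\frac{1+w}{2}z^2$. Assume on $I$: $\dot x=[-x+4c\,y_{\mathrm r}y_{\mathrm i}+x\xi]h$, $\dot y_{\mathrm r}=[\xi y_{\mathrm r}-c\,x\,y_{\mathrm i}]h$, $\dot y_{\mathrm i}=[\xi y_{\mathrm i}+c\,x\,y_{\mathrm r}]h$, $\dot z=[-\frac{1+w}{2}+\xi]zh$, $\dot h=-\xi h^2$, with constraints $x^2+4y_{\mathrm r}^2+z^2=1-\sigma/h^2$ and $y_{\mathrm r}^2+y_{\mathrm i}^2=\frac{l^2}{2h^2}$. (Here $\sigma=L^2$ encodes a cosmological constant $\Lambda$ added to the cosine potential, of the sign of $\Lambda$.) Time-interval setup: let $t_{\mathrm b}\in I$, $\xi_{\mathrm b}:=\xi(t_{\mathrm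 b})$, and let $\xi_0$ be a real number with $\xi_0>0$ and $\xi_{\mathrm b}\le\xi_0\le\frac{1+w}{2}$. Assume the set $\{t\in I:\ t\ge t_{\mathrm b},\ \xi(t)=\xi_0\}$ is nonempty and let $t_0$ be its minimum (so $\xi(t)\le\xi_0$ for all $t\in[t_{\mathrm b},t_0]$); put $\Delta t_{\mathrm b0}=t_0-t_{\mathrm b}$. *)

(* Defs.v *)
From Stdlib Require Import Reals.
Open Scope R_scope.

Definition is_interval (I : R -> Prop) : Prop :=
  forall a b t, I a -> I b -> a <= t <= b -> I t.

Definition has_deriv_on (I : R -> Prop) (f f' : R -> R) : Prop :=
  forall t, I t ->
    forall eps, 0 < eps -> exists delta, 0 < delta /\
      forall s, I s -> Rabs (s - t) < delta ->
        Rabs (f s - f t - f' t * (s - t)) <= eps * Rabs (s - t).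

Definition continuous_on_I (I : R -> Prop) (g : R -> R) : Prop :=
  forall t, I t ->
    forall eps, 0 < eps -> exists delta, 0 < delta /\
      forall s, I s -> Rabs (s - t) < delta -> Rabs (g s - g t) < eps.

Definition C1_on (I : R -> Prop) (f f' : R -> R) : Prop :=
  has_deriv_on I f f' /\ continuous_on_I I f'.

(* Main.v *)
Require Import Defs.
From Stdlib Require Import Reals Lra Psatz.
From Coquelicot Require Import Coquelicot.
Open Scope R_scope.

Definition clamp (a b s : R) := Rmax a (Rmin b s).

Lemma clamp_id a b s : a <= s <= b -> clamp a b s = s.
Proof. intros. unfold clamp, Rmax, Rmin. repeat destruct Rle_dec; lra. Qed.

Lemma clamp_in a b s : a <= b -> a <= clamp a b s <= b.
Proof. intros. unfold clamp, Rmax, Rmin. repeat destruct Rle_dec; lra. Qed.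

Lemma clamp_lip a b s t : a <= b -> Rabs (clamp a b s - clamp a b t) <= Rabs (s - t).
Proof. intros. unfold clamp, Rmax, Rmin. repeat destruct Rle_dec;
  unfold Rabs; repeat destruct Rcase_abs; lra. Qed.

Lemma deriv_cont I f f' : has_deriv_on I f f' -> continuous_on_I I f.
Proof.
  intros Hd t It eps He.
  destruct (Hd t It 1 ltac:(lra)) as [d0 [Hd0 Hs]].
  assert (Hp : 0 < Rabs (f' t) + 2) by (pose proof (Rabs_pos (f' t)); lra).
  exists (Rmin d0 (eps / (Rabs (f' t) + 2))). split.
  { apply Rmin_pos; [lra| apply Rdiv_lt_0_compat; lra]. }
  intros s Is Hst.
  assert (H1 : Rabs (s - t) < d0) by (eapply Rlt_le_trans; [exact Hst| apply Rmin_l]).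
  assert (H2 : Rabs (s - t) < eps / (Rabs (f' t) + 2))
    by (eapply Rlt_le_trans; [exact Hst| apply Rmin_r]).
  specialize (Hs s Is H1).
  replace (f s - f t) with ((f s - f t - f' t * (s - t)) + f' t * (s - t)) by ring.
  eapply Rle_lt_trans; [apply Rabs_triang|]. rewrite Rabs_mult.
  assert (H3 : Rabs (s - t) * (Rabs (f' t) + 2) < eps).
  { apply (Rmult_lt_compat_r (Rabs (f' t) + 2)) in H2; [|lra].
    unfold Rdiv in H2. rewrite Rmult_assoc, Rinv_l in H2 by lra. lra. }
  pose proof (Rabs_pos (f' t)). pose proof (Rabs_pos (s - t)). nra.
Qed.

Lemma cont_clamp I f a b : is_interval I -> I a -> I b -> a <= b ->
  continuous_on_I I f -> forall t, continuity_pt (fun s => f (clamp a b s)) t.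
Proof.
  intros HI Ia Ib Hab Hc t eps He.
  assert (Ict : I (clamp a b t)) by (apply (HI a b); auto; apply clamp_in; auto).
  destruct (Hc _ Ict eps He) as [d [Hd Hs]].
  exists d. split; [lra|]. intros s [_ Hst]. simpl in *. unfold R_dist in *.
  apply Hs.
  - apply (HI a b); auto; apply clamp_in; auto.
  - eapply Rle_lt_trans; [apply clamp_lip; auto| exact Hst].
Qed.

Lemma deriv_clamp I f f' a b t : is_interval I -> I a -> I b -> a < t < b ->
  has_deriv_on I f f' -> is_derive (fun s => f (clamp a b s)) t (f' t).
Proof.
  intros HI Ia Ib Ht Hd. apply is_derive_Reals. intros eps He.
  assert (It : I t) by (apply (HI a b); auto; lra).
  destruct (Hd t It (eps/2) ltac:(lra)) as [d0 [Hd0 Hs]].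
  assert (Hpos : 0 < Rmin d0 (Rmin (t - a) (b - t)))
    by (repeat apply Rmin_pos; lra).
  exists (mkposreal _ Hpos). intros hh Hh0 Hhd. simpl in Hhd.
  assert (H1 : Rabs hh < d0) by (eapply Rlt_le_trans; [exact Hhd| apply Rmin_l]).
  assert (H2 : Rabs hh < Rmin (t - a) (b - t))
    by (eapply Rlt_le_trans; [exact Hhd| apply Rmin_r]).
  assert (H3 : Rabs hh < t - a) by (eapply Rlt_le_trans; [exact H2| apply Rmin_l]).
  assert (H4 : Rabs hh < b - t) by (eapply Rlt_le_trans; [exact H2| apply Rmin_r]).
  assert (Hr : a < t + hh < b) by (unfold Rabs in *; destruct Rcase_abs; lra).
  rewrite !clamp_id by lra.
  assert (Ith : I (t + hh)) by (apply (HI a b); auto; lra).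
  specialize (Hs (t + hh) Ith). replace (t + hh - t) with hh in Hs by ring.
  specialize (Hs H1).
  replace ((f (t + hh) - f t) / hh - f' t) with ((f (t + hh) - f t - f' t * hh) / hh)
    by (field; auto).
  assert (Ha : 0 < Rabs hh) by (apply Rabs_pos_lt; auto).
  unfold Rdiv. rewrite Rabs_mult, Rabs_inv.
  apply (Rmult_lt_reg_r (Rabs hh)); auto.
  rewrite Rmult_assoc, Rinv_l by lra. nra.
Qed.
Theorem mainTheorem4
  (c l w sigma : R) (I : R -> Prop)
  (x yr yi z h dx dyr dyi dz dh : R -> R)
  (tb t0 xi0 b : R)
  (Hc : 0 < c) (Hl : 0 < l) (Hw : -1 <= w <= 1)
  (Hsigma : sigma < 0)
  (HI : is_interval I)
  (Hx1 : C1_on I x dx) (Hyr1 : C1_on I yr dyr) (Hyi1 : C1_on I yi dyi)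
  (Hz1 : C1_on I z dz) (Hh1 : C1_on I h dh)
  (Hhpos : forall t, I t -> 0 < h t)
  (Hznn : forall t, I t -> 0 <= z t)
  (Hdx : forall t, I t -> dx t =
     (- x t + 4 * c * yr t * yi t
        + x t * (x t ^ 2 + (1 + w) / 2 * z t ^ 2)) * h t)
  (Hdyr : forall t, I t -> dyr t =
     ((x t ^ 2 + (1 + w) / 2 * z t ^ 2) * yr t - c * x t * yi t) * h t)
  (Hdyi : forall t, I t -> dyi t =
     ((x t ^ 2 + (1 + w) / 2 * z t ^ 2) * yi t + c * x t * yr t) * h t)
  (Hdz : forall t, I t -> dz t =
     (- ((1 + w) / 2) + (x t ^ 2 + (1 + w) / 2 * z t ^ 2)) * z t * h t)
  (Hdh : forall t, I t -> dh t =
     - (x t ^ 2 + (1 + w) / 2 * z t ^ 2) * h t ^ 2)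
  (Hcon1 : forall t, I t ->
     x t ^ 2 + 4 * yr t ^ 2 + z t ^ 2 = 1 - sigma / h t ^ 2)
  (Hcon2 : forall t, I t ->
     yr t ^ 2 + yi t ^ 2 = l ^ 2 / (2 * h t ^ 2))
  (* time-interval setup *)
  (Htb : I tb)
  (Hxi0pos : 0 < xi0)
  (Hxib : x tb ^ 2 + (1 + w) / 2 * z tb ^ 2 <= xi0)
  (Hxi0w : xi0 <= (1 + w) / 2)
  (Ht0 : I t0) (Ht0b : tb <= t0)
  (Hxit0 : x t0 ^ 2 + (1 + w) / 2 * z t0 ^ 2 = xi0)
  (Ht0min : forall t, I t -> tb <= t ->
     x t ^ 2 + (1 + w) / 2 * z t ^ 2 = xi0 -> t0 <= t)
  (* b = max over [tb, t0] of sqrt 2 |yi| h / l, and b > 0 *)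
  (Hb_ub : forall t, tb <= t <= t0 -> sqrt 2 * Rabs (yi t) * h t / l <= b)
  (Hb_att : exists t, tb <= t <= t0 /\ b = sqrt 2 * Rabs (yi t) * h t / l)
  (Hbpos : 0 < b) :
  t0 - tb >=
    1 / (2 * sqrt (2 * xi0)) * (1 / (b * c * l))
    * ((xi0 - (x tb ^ 2 + (1 + w) / 2 * z tb ^ 2))
       / sqrt (1 + Rabs sigma / h t0 ^ 2)).
Proof.
  set (k := (1 + w) / 2).
  assert (Hk0 : 0 <= k) by (unfold k; lra).
  assert (Hk1 : k <= 1) by (unfold k; lra).
  assert (HIb : forall t, tb <= t <= t0 -> I t) by (intros; apply (HI tb t0); auto).
  destruct Hx1 as [Hxd Hxc']. destruct Hz1 as [Hzd Hzc']. destruct Hh1 as [Hhd Hhc'].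
  set (X := fun s => x (clamp tb t0 s)).
  set (Z := fun s => z (clamp tb t0 s)).
  set (H := fun s => h (clamp tb t0 s)).
  assert (HXc : forall t, continuity_pt X t)
    by (apply (cont_clamp I); auto; eapply deriv_cont; eauto).
  assert (HZc : forall t, continuity_pt Z t)
    by (apply (cont_clamp I); auto; eapply deriv_cont; eauto).
  assert (HHc : forall t, continuity_pt H t)
    by (apply (cont_clamp I); auto; eapply deriv_cont; eauto).
  set (Xi := fun s => X s * X s + k * (Z s * Z s)).
  assert (HXic : continuity Xi).
  { intro t. unfold Xi.
    apply (continuity_pt_plus (fun s => X s * X s) (fun s => k * (Z s * Z s))).
    - apply (continuity_pt_mult X X); auto.
    - apply (continuity_pt_mult (fun _ => k) (fun s => Z s * Z s)).
      + apply continuity_pt_const. intros ? ?; reflexivity.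
      + apply (continuity_pt_mult Z Z); auto. }
  assert (HXiv : forall s, tb <= s <= t0 -> Xi s = x s ^ 2 + k * z s ^ 2).
  { intros s Hs. unfold Xi, X, Z. rewrite clamp_id by auto. ring. }
  assert (HHv : forall s, tb <= s <= t0 -> H s = h s).
  { intros s Hs. unfold H. rewrite clamp_id by auto. ring. }
  assert (HA : forall t, tb <= t <= t0 -> x t ^ 2 + k * z t ^ 2 <= xi0).
  { intros t Ht. destruct (Rle_or_lt (x t ^ 2 + k * z t ^ 2) xi0) as [|Hlt]; auto.
    exfalso.
    assert (Htt : t < t0).
    { destruct (Rle_lt_or_eq_dec t t0) as [|E]; [lra|auto|]. subst t. unfold k in Hlt. lra. }
    assert (Hy : Rmin (Xi tb) (Xi t) <= xi0 <= Rmax (Xi tb) (Xi t)).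
    { rewrite !HXiv by lra. unfold k in *. unfold Rmin, Rmax.
      repeat destruct Rle_dec; lra. }
    destruct (IVT_gen Xi tb t xi0 HXic Hy) as [s [Hs Hxs]].
    assert (Hs' : tb <= s <= t).
    { unfold Rmin, Rmax in Hs. repeat destruct Rle_dec; lra. }
    rewrite HXiv in Hxs by lra.
    assert (t0 <= s) by (apply Ht0min; [apply HIb; lra | lra| unfold k in Hxs; lra]).
    lra. }
  assert (HB : forall t, tb <= t <= t0 -> h t0 <= h t).
  { intros t Ht.
    assert (Hd : forall s, Rmin t t0 < s < Rmax t t0 -> is_derive H s (dh s)).
    { intros s Hs. unfold Rmin, Rmax in Hs. repeat destruct Rle_dec; try lra.
      apply (deriv_clamp I); auto; lra. }
    destruct (MVT_gen H t t0 dh Hd (fun s _ => HHc s)) as [c0 [Hc0 Hm]].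
    assert (Hc0' : t <= c0 <= t0) by (unfold Rmin, Rmax in Hc0; repeat destruct Rle_dec; lra).
    rewrite !HHv in Hm by lra.
    rewrite Hdh in Hm by (apply HIb; lra). fold k in Hm.
    assert (0 <= x c0 ^ 2 + k * z c0 ^ 2)
      by (pose proof (pow2_ge_0 (x c0)); pose proof (pow2_ge_0 (z c0)); nra).
    pose proof (pow2_ge_0 (h c0)).
    assert (0 <= (x c0 ^ 2 + k * z c0 ^ 2) * h c0 ^ 2 * (t0 - t))
      by (apply Rmult_le_pos; [apply Rmult_le_pos|]; lra).
    lra. }
  set (dXi := fun s => 2 * x s * dx s + k * (2 * z s * dz s)).
  assert (Hd : forall s, Rmin tb t0 < s < Rmax tb t0 -> is_derive Xi s (dXi s)).
  { intros s Hs. unfold Rmin, Rmax in Hs. repeat destruct Rle_dec; try lra.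
    assert (HX := deriv_clamp I x dx tb t0 s HI Htb Ht0 ltac:(lra) Hxd).
    assert (HZ := deriv_clamp I z dz tb t0 s HI Htb Ht0 ltac:(lra) Hzd).
    fold X in HX. fold Z in HZ.
    pose proof (is_derive_plus _ _ _ _ _ (Derive.is_derive_mult _ _ _ _ _ HX HX)
       (is_derive_scal _ _ k _ (Derive.is_derive_mult _ _ _ _ _ HZ HZ))) as Hp.
    unfold Xi. simpl in Hp.
    replace (dXi s) with (dx s * X s + X s * dx s + k * (dz s * Z s + Z s * dz s)).
    { exact Hp. }
    unfold dXi, X, Z. rewrite clamp_id by lra. unfold plus, scal, mult; simpl. ring. }
  destruct (MVT_gen Xi tb t0 dXi Hd (fun s _ => HXic s)) as [c0 [Hc0 Hm]].
  assert (Hc0' : tb <= c0 <= t0) by (unfold Rmin, Rmax in Hc0; repeat destruct Rle_dec; lra).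
  rewrite !HXiv in Hm by lra.
  set (S := sqrt (1 + Rabs sigma / h t0 ^ 2)).
  assert (Hh0 : 0 < h t0) by auto.
  assert (HS2pos : 0 < 1 + Rabs sigma / h t0 ^ 2).
  { pose proof (Rabs_pos sigma). assert (0 < h t0 ^ 2) by (apply pow_lt; auto).
    assert (0 <= Rabs sigma / h t0 ^ 2) by (apply Rdiv_le_0_compat; lra). lra. }
  assert (HSpos : 0 < S) by (apply sqrt_lt_R0; auto).
  assert (HSS : S * S = 1 + Rabs sigma / h t0 ^ 2) by (apply sqrt_sqrt; lra).
  set (M := 2 * sqrt (2 * xi0) * (b * c * l) * S).
  assert (Hsq2 : sqrt (2 * xi0) = sqrt 2 * sqrt xi0) by (apply sqrt_mult; lra).
  assert (Hs2 : sqrt 2 * sqrt 2 = 2) by (apply sqrt_sqrt; lra).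
  assert (Hs2p : 0 < sqrt 2) by (apply sqrt_lt_R0; lra).
  assert (Hsx : 0 < sqrt xi0) by (apply sqrt_lt_R0; lra).
  assert (Hsxx : sqrt xi0 * sqrt xi0 = xi0) by (apply sqrt_sqrt; lra).
  assert (HMpos : 0 < M) by (unfold M; rewrite Hsq2;
     repeat apply Rmult_lt_0_compat; lra).
  assert (Hbound : dXi c0 <= M).
  { assert (Ic : I c0) by (apply HIb; lra).
    unfold dXi. rewrite Hdx, Hdz by auto.
    pose proof (HA c0 Hc0') as Hxi. pose proof (HB c0 Hc0') as Hhc.
    pose proof (Hhpos c0 Ic) as Hhp. pose proof (Hcon1 c0 Ic) as Hc1.
    pose proof (Hb_ub c0 Hc0') as Hbu.
    fold k in Hdx, Hdz, Hc1 |- *.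
    set (X0 := x c0) in *. set (Y0 := yr c0) in *. set (V0 := yi c0) in *.
    set (Z0 := z c0) in *. set (H0 := h c0) in *.
    set (xi := X0 ^ 2 + k * Z0 ^ 2) in *.
    assert (Hxi0 : 0 <= xi) by (unfold xi; pose proof (pow2_ge_0 X0); pose proof (pow2_ge_0 Z0); nra).
    assert (Hneg : xi * xi <= X0 ^ 2 + k * k * Z0 ^ 2).
    { assert (Hxk : xi0 <= k) by exact Hxi0w.
      assert (xi * xi <= k * xi) by (apply Rmult_le_compat_r; lra).
      assert (k * xi = k * X0 ^ 2 + k * k * Z0 ^ 2) by (unfold xi; ring).
      pose proof (pow2_ge_0 X0).
      assert (k * X0 ^ 2 <= X0 ^ 2) by nra. lra. }
    assert (HX : Rabs X0 <= sqrt xi0).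
    { rewrite <- sqrt_Rsqr_abs. apply sqrt_le_1_alt. unfold Rsqr, xi in *.
      pose proof (pow2_ge_0 Z0). nra. }
    assert (HY : Rabs Y0 <= S / 2).
    { assert (Hsig : - sigma / H0 ^ 2 <= - sigma / h t0 ^ 2).
      { unfold Rdiv. apply Rmult_le_compat_l; [lra|].
        apply Rinv_le_contravar; [apply pow_lt; lra|].
        apply pow_incr; lra. }
      rewrite Rabs_left in HSS by lra.
      assert (4 * Y0 ^ 2 <= S * S).
      { pose proof (pow2_ge_0 X0). pose proof (pow2_ge_0 Z0).
        unfold Rdiv in *. rewrite HSS. lra. }
      assert (Rabs Y0 * Rabs Y0 = Y0 ^ 2) by (rewrite <- Rabs_mult; rewrite Rabs_right; [ring| nra]).
      pose proof (Rabs_pos Y0). nra. }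
    assert (HV : sqrt 2 * (Rabs V0 * H0) <= b * l).
    { apply (Rmult_le_compat_r l) in Hbu; [|lra]. unfold Rdiv in Hbu.
      replace (sqrt 2 * Rabs V0 * H0 * / l * l) with (sqrt 2 * (Rabs V0 * H0)) in Hbu
        by (field; lra). lra. }
    assert (HV2 : 2 * (Rabs V0 * H0) <= sqrt 2 * (b * l)).
    { replace (2 * (Rabs V0 * H0)) with (sqrt 2 * (sqrt 2 * (Rabs V0 * H0)))
        by (rewrite <- Rmult_assoc, Hs2; ring).
      apply Rmult_le_compat_l; lra. }
    assert (Hprod : X0 * Y0 * V0 * H0 <= sqrt xi0 * (S / 2) * (Rabs V0 * H0)).
    { apply (Rle_trans _ (Rabs (X0 * Y0 * V0 * H0))); [apply Rle_abs|].
      rewrite !Rabs_mult, (Rabs_right H0) by lra.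
      pose proof (Rabs_pos X0). pose proof (Rabs_pos Y0). pose proof (Rabs_pos V0).
      assert (Rabs X0 * Rabs Y0 <= sqrt xi0 * (S / 2)) by
        (apply Rmult_le_compat; auto).
      assert (0 <= Rabs V0 * H0) by nra. nra. }
    assert (Hfirst : 2 * X0 * ((- X0 + 4 * c * Y0 * V0 + X0 * xi) * H0)
        + k * (2 * Z0 * ((- k + xi) * Z0 * H0))
        = H0 * (2 * (xi * xi) - 2 * X0 ^ 2 - 2 * k * k * Z0 ^ 2) + 8 * c * (X0 * Y0 * V0 * H0)).
    { unfold xi. ring. }
    rewrite Hfirst.
    assert (H0 * (2 * (xi * xi) - 2 * X0 ^ 2 - 2 * k * k * Z0 ^ 2) <= 0) by nra.
    assert (8 * c * (X0 * Y0 * V0 * H0) <= 8 * c * (sqrt xi0 * (S / 2) * (Rabs V0 * H0)))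
      by (apply Rmult_le_compat_l; lra).
    assert (8 * c * (sqrt xi0 * (S / 2) * (Rabs V0 * H0)) <= M).
    { unfold M. rewrite Hsq2.
      replace (8 * c * (sqrt xi0 * (S / 2) * (Rabs V0 * H0)))
        with (2 * c * sqrt xi0 * S * (2 * (Rabs V0 * H0))) by field.
      replace (2 * (sqrt 2 * sqrt xi0) * (b * c * l) * S)
        with (2 * c * sqrt xi0 * S * (sqrt 2 * (b * l))) by ring.
      apply Rmult_le_compat_l; auto.
      repeat apply Rmult_le_pos; lra. }
    lra. }
  assert (Hfin : xi0 - (x tb ^ 2 + k * z tb ^ 2) <= M * (t0 - tb)).
  { fold k in Hxit0. rewrite <- Hxit0, Hm.
    apply Rmult_le_compat_r; lra. }
  fold k.
  replace (1 / (2 * sqrt (2 * xi0)) * (1 / (b * c * l)) *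
    ((xi0 - (x tb ^ 2 + k * z tb ^ 2)) / S)) with ((xi0 - (x tb ^ 2 + k * z tb ^ 2)) / M).
  2: { unfold M. field. rewrite Hsq2. repeat split; try lra.
       apply Rgt_not_eq. apply Rmult_lt_0_compat; lra. }
  apply Rle_ge. unfold Rdiv. apply (Rmult_le_reg_r M); auto.
  rewrite Rmult_assoc, Rinv_l by lra. lra.
Qed.
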